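(* Let $M$ be a monoid without a zero element, and let $M_0 = M \cup \{0_M\}$ be the monoid obtained by adjoining a zero $0_M$. Then $$\mathrm{Rec}(M_0) = \mathrm{Rec}(M) \cup \{ R \cup \{0_M\} \mid R \in \mathrm{Rec}(M)\}.$$
   Context: An element $z$ of a monoid $M$ is a zero if $zm = mz = z$ for all $m\in M$. Adjoining a zero to $M$ means forming $M\cup\{0_M\}$ with $0_M$ a new element, the multiplication of $M$ extended by $0_M m = m 0_M = 0_M 0_M = 0_M$. A subset $S$ of a monoid $M$ is recognizable if there exist a finite monoid $N$, a monoid morphism $\varphi\colon M \to N$ and a subset $T \subseteq N$ with $S = \varphi^{-1}(T)$; $\mathrm{Rec}(M)$ denotes the set of recognizable subsets of $M$. *)

(* Defs.v *)
From Stdlib Require Import List.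

Record monoid := Monoid {
  carrier :> Type;
  mop : carrier -> carrier -> carrier;
  mone : carrier;
  mopA : forall x y z, mop x (mop y z) = mop (mop x y) z;
  mop1l : forall x, mop mone x = x;
  mop1r : forall x, mop x mone = x
}.
Arguments mop {m}.
Arguments mone {m}.

Definition is_zero (M : monoid) (z : M) : Prop :=
  forall m : M, mop z m = z /\ mop m z = z.

Definition has_zero (M : monoid) : Prop := exists z : M, is_zero M z.

Definition monoid_morphism (M N : monoid) (f : M -> N) : Prop :=
  f mone = mone /\ forall x y : M, f (mop x y) = mop (f x) (f y).

Definition finite_monoid (N : monoid) : Prop :=
  exists l : list N, forall x : N, In x l.

Definition recognizable (M : monoid) (S : M -> Prop) : Prop :=
  exists (N : monoid) (f : M -> N) (T : N -> Prop),
    finite_monoid N /\ monoid_morphism M N f /\ (forall m : M, S m <-> T (f m)).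

(* Adjoining a zero: carrier option M, with None playing the role of 0_M. *)
Definition adj_op (M : monoid) (x y : option M) : option M :=
  match x, y with
  | Some a, Some b => Some (mop a b)
  | _, _ => None
  end.

Lemma adj_opA (M : monoid) (x y z : option M) :
  adj_op M x (adj_op M y z) = adj_op M (adj_op M x y) z.
Proof. destruct x, y, z; simpl; auto; rewrite mopA; reflexivity. Qed.

Lemma adj_op1l (M : monoid) (x : option M) : adj_op M (Some mone) x = x.
Proof. destruct x; simpl; auto; rewrite mop1l; reflexivity. Qed.

Lemma adj_op1r (M : monoid) (x : option M) : adj_op M x (Some mone) = x.
Proof. destruct x; simpl; auto; rewrite mop1r; reflexivity. Qed.

Definition adjoin_zero (M : monoid) : monoid :=
  Monoid (option M) (adj_op M) (Some mone) (adj_opA M) (adj_op1l M) (adj_op1r M).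

Definition zero0 (M : monoid) : adjoin_zero M := None.

(* Main.v *)
Require Import Defs.
From Stdlib Require Import List Classical.

Theorem proposition4 (M : monoid) (hM : ~ has_zero M)
    (S : adjoin_zero M -> Prop) :
  recognizable (adjoin_zero M) S <->
  exists R : M -> Prop, recognizable M R /\
    ((forall x : adjoin_zero M, S x <-> exists m : M, x = Some m /\ R m) \/
     (forall x : adjoin_zero M,
        S x <-> x = zero0 M \/ exists m : M, x = Some m /\ R m)).
Proof.
  split.
  - intros [N [f [T [Hfin [[H1 Hm] HS]]]]].
    exists (fun m => S (Some m)). split.
    + exists N, (fun m => f (Some m)), T. split; [exact Hfin|]. split.
      * split; [exact H1|]. intros x y. apply (Hm (Some x) (Some y)).
      * intros m. apply HS.
    + destruct (classic (S None)) as [H0|H0].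
      * right. intros [m|]; split.
        -- intros Hs. right. eauto.
        -- intros [E|[m' [E Hr]]]; [discriminate|]. injection E as ->. exact Hr.
        -- intros _. left. reflexivity.
        -- intros _. exact H0.
      * left. intros [m|]; split.
        -- intros Hs. eauto.
        -- intros [m' [E Hr]]. injection E as ->. exact Hr.
        -- intros Hs. contradiction.
        -- intros [m' [E _]]. discriminate.
  - intros [R [[N [g [T [[l Hl] [[H1 Hm] HR]]]]] Hcase]].
    exists (adjoin_zero N), (fun x : adjoin_zero M => match x with Some m => Some (g m) | None => None end).
    destruct Hcase as [HS|HS].
    + exists (fun y : adjoin_zero N => exists n, y = Some n /\ T n).
      split; [exists (None :: map Some l); intros [n|]; simpl; [right; apply in_map; apply Hl| left; reflexivity]|].
      split.
      * split; [simpl; rewrite H1; reflexivity|].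
        intros [x|] [y|]; simpl; try reflexivity. rewrite Hm. reflexivity.
      * intros x. rewrite HS. destruct x as [m|]; split.
        -- intros [m' [E Hr]]. injection E as ->. exists (g m'). split; [reflexivity|]. apply HR; exact Hr.
        -- intros [n [E Ht]]. injection E as <-. exists m. split; [reflexivity|]. apply HR; exact Ht.
        -- intros [m' [E _]]. discriminate.
        -- intros [n [E _]]. discriminate.
    + exists (fun y : adjoin_zero N => y = None \/ exists n, y = Some n /\ T n).
      split; [exists (None :: map Some l); intros [n|]; simpl; [right; apply in_map; apply Hl| left; reflexivity]|].
      split.
      * split; [simpl; rewrite H1; reflexivity|].
        intros [x|] [y|]; simpl; try reflexivity. rewrite Hm. reflexivity.
      * intros x. rewrite HS. destruct x as [m|]; split.
        -- intros [E|[m' [E Hr]]]; [discriminate|]. injection E as ->. right. exists (g m'). split; [reflexivity|]. apply HR; exact Hr.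
        -- intros [E|[n [E Ht]]]; [discriminate|]. injection E as <-. right. exists m. split; [reflexivity|]. apply HR; exact Ht.
        -- intros _. left. reflexivity.
        -- intros _. left. reflexivity.
Qed.
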